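(* Let $c>0$ and let $F$ be defined by $$F(\theta)=\frac{\int_{0}^{\theta}\int_{0}^{\theta}e^{c\cos(a-b)}\,da\,db}{2\pi\int_{0}^{2\pi}e^{c\cos a}\,da}-\Big(\frac{\theta}{2\pi}\Big)^{2}.$$ Let $\theta_1,\theta_2,\theta_3\ge0$ with $\theta_1+\theta_2+\theta_3=2\pi$ and $\theta_i\le\pi$ for all $1\le i\le3$. Then $$-3F(2\pi/3)+\sum_{i=1}^3F(\theta_i)\le 0.158\Big(-1+\Big(1-\frac{3^{4/3}}{5}\Big)e^{-c\pi/2}+\frac{3^{4/3}}{5}e^{-c\pi/6}\Big)\sum_{i=1}^3\Big(\frac{\theta_i}{2\pi}-\frac13\Big)^2.$$
   Context: In the paper $c=\rho rs/(1-\rho^2)$ with $0<\rho<1$, $r,s>0$. *)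

(* Defs.v *)
From Stdlib Require Import Reals.
From Coquelicot Require Import Coquelicot.
Open Scope R_scope.

Definition F (c theta : R) : R :=
  RInt (fun a => RInt (fun b => exp (c * cos (a - b))) 0 theta) 0 theta
  / (2 * PI * RInt (fun a => exp (c * cos a)) 0 (2 * PI))
  - (theta / (2 * PI)) ^ 2.

(* Main.v *)
Require Import Defs.
From Stdlib Require Import Reals Lra QArith Qreals List Factorial.
From Coquelicot Require Import Coquelicot.
Import ListNotations.
Open Scope R_scope.

Ltac rg := first [ring | field].

Fixpoint peval (p : list Q) (x : R) : R :=
  match p with nil => 0 | c :: q => Q2R c + x * peval q x end.

Fixpoint padd (p q : list Q) : list Q :=
  match p, q with
  | nil, _ => q
  | _, nil => p
  | a :: p', b :: q' => Qred (a + b)%Q :: padd p' q'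
  end.

Definition pscale (c : Q) (p : list Q) : list Q := map (fun a => Qred (c * a)%Q) p.

Fixpoint pmul (p q : list Q) : list Q :=
  match p with nil => nil | a :: p' => padd (pscale a q) (0%Q :: pmul p' q) end.

Fixpoint pderiv (p : list Q) : list Q :=
  match p with nil => nil | c :: q => padd q (0%Q :: pderiv q) end.

Lemma Q2R0 : Q2R 0 = 0. Proof. unfold Q2R; simpl; field. Qed.

Lemma peval_add p q x : peval (padd p q) x = peval p x + peval q x.
Proof.
  revert q; induction p as [|a p IH]; intros [|b q]; cbn [padd peval]; try rg.
  rewrite (Qeq_eqR _ _ (Qred_correct _)), Q2R_plus, IH; rg.
Qed.

Lemma peval_scale c p x : peval (pscale c p) x = Q2R c * peval p x.
Proof.
  unfold pscale. induction p as [|a p IH]; cbn [map peval]; [rg|]. rewrite (Qeq_eqR _ _ (Qred_correct _)), Q2R_mult, IH; rg.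
Qed.

Lemma peval_mul p q x : peval (pmul p q) x = peval p x * peval q x.
Proof.
  induction p as [|a p IH]; simpl; [rg|].
  rewrite peval_add, peval_scale; simpl. rewrite IH, Q2R0; rg.
Qed.

Lemma is_derive_Rconst (a x : R) : is_derive (fun _ => a) x 0.
Proof. exact (is_derive_const (K:=R_AbsRing) (V:=R_NormedModule) a x). Qed.
Lemma is_derive_Rid (x : R) : is_derive (fun y => y) x 1.
Proof. exact (is_derive_id (K:=R_AbsRing) x). Qed.

Lemma peval_deriv p x : is_derive (peval p) x (peval (pderiv p) x).
Proof.
  induction p as [|a p IH]; simpl.
  - apply is_derive_Rconst.
  - rewrite peval_add; simpl. rewrite Q2R0.
    replace (peval p x + (0 + x * peval (pderiv p) x)) with
      (0 + (1 * peval p x + x * peval (pderiv p) x)) by rg.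
    apply (is_derive_plus (fun _ => Q2R a) (fun y => y * peval p y)).
    + apply is_derive_Rconst.
    + apply (is_derive_mult (fun y => y) (peval p)).
      * apply is_derive_Rid.
      * exact IH.
      * intros; apply Rmult_comm.
Qed.

Lemma peval_cont p x : continuous (peval p) x.
Proof. apply (ex_derive_continuous (K:=R_AbsRing) (V:=R_NormedModule)). eexists. apply peval_deriv. Qed.

Definition qmin (a b : Q) : Q := if Qle_bool a b then a else b.
Definition qmax (a b : Q) : Q := if Qle_bool a b then b else a.

Fixpoint lbub (p : list Q) (l r : Q) : Q * Q :=
  match p with
  | nil => (0%Q, 0%Q)
  | c :: q => let (lo, hi) := lbub q l r in
       (Qred (c + qmin (l * lo) (r * lo))%Q, Qred (c + qmax (l * hi) (r * hi))%Q)
  end.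

Lemma qmin_le a b : Q2R (qmin a b) <= Q2R a /\ Q2R (qmin a b) <= Q2R b.
Proof.
  unfold qmin; destruct (Qle_bool a b) eqn:E.
  - apply Qle_bool_iff, Qle_Rle in E; lra.
  - split; [|lra]. assert (~ (a <= b)%Q) by (intro H; apply Qle_bool_iff in H; congruence).
    apply Qnot_le_lt, Qlt_Rlt in H; lra.
Qed.

Lemma qmax_ge a b : Q2R a <= Q2R (qmax a b) /\ Q2R b <= Q2R (qmax a b).
Proof.
  unfold qmax; destruct (Qle_bool a b) eqn:E.
  - apply Qle_bool_iff, Qle_Rle in E; lra.
  - split; [lra|]. assert (~ (a <= b)%Q) by (intro H; apply Qle_bool_iff in H; congruence).
    apply Qnot_le_lt, Qlt_Rlt in H; lra.
Qed.

Lemma lbub_correct p l r x : 0 <= Q2R l -> Q2R l <= x <= Q2R r ->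
  Q2R (fst (lbub p l r)) <= peval p x <= Q2R (snd (lbub p l r)).
Proof.
  intros H0 Hx. induction p as [|c q IH]; cbn [lbub peval fst snd].
  - rewrite Q2R0; lra.
  - destruct (lbub q l r) as [lo hi]; cbn [fst snd] in *.
    rewrite !(Qeq_eqR _ _ (Qred_correct _)), !Q2R_plus.
    destruct (qmin_le (l*lo) (r*lo)) as [m1 m2].
    destruct (qmax_ge (l*hi) (r*hi)) as [M1 M2].
    rewrite !Q2R_mult in m1, m2, M1, M2.
    destruct IH as [I1 I2].
    assert (A : Q2R l * Q2R lo + (x - Q2R l) / (Q2R r - Q2R l + 1) * 0 <= x * Q2R lo \/ Q2R r * Q2R lo <= x * Q2R lo).
    { destruct (Rle_dec 0 (Q2R lo)).
      - left. nra.
      - right. nra. }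
    assert (B : x * Q2R hi <= Q2R l * Q2R hi \/ x * Q2R hi <= Q2R r * Q2R hi).
    { destruct (Rle_dec 0 (Q2R hi)).
      - right. nra.
      - left. nra. }
    split; nra.
Qed.

Fixpoint chk (n : nat) (p : list Q) (l r : Q) : bool :=
  negb (Qle_bool (fst (lbub p l r)) 0) ||
  match n with
  | O => false
  | S n' => let m := Qred ((l + r) / 2) in chk n' p l m && chk n' p m r
  end.

Lemma chk_correct n p l r : chk n p l r = true -> 0 <= Q2R l ->
  forall x, Q2R l <= x <= Q2R r -> 0 < peval p x.
Proof.
  revert l r; induction n as [|n IH]; intros l r H Hl x Hx; simpl in H.
  - rewrite Bool.orb_false_r in H.
    apply Bool.negb_true_iff in H.
    assert (~ (fst (lbub p l r) <= 0)%Q) by (intro K; apply Qle_bool_iff in K; congruence).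
    apply Qnot_le_lt, Qlt_Rlt in H0. rewrite Q2R0 in H0.
    pose proof (lbub_correct p l r x Hl Hx); lra.
  - apply Bool.orb_true_iff in H; destruct H as [H|H].
    + apply Bool.negb_true_iff in H.
      assert (~ (fst (lbub p l r) <= 0)%Q) by (intro K; apply Qle_bool_iff in K; congruence).
      apply Qnot_le_lt, Qlt_Rlt in H0. rewrite Q2R0 in H0.
      pose proof (lbub_correct p l r x Hl Hx); lra.
    + apply Bool.andb_true_iff in H; destruct H as [H1 H2].
      set (m := Qred ((l + r) / 2)) in *.
      assert (Em : Q2R m = (Q2R l + Q2R r) / 2).
      { unfold m; rewrite (Qeq_eqR _ _ (Qred_correct _)).
        unfold Qdiv; rewrite Q2R_mult, Q2R_plus, Q2R_inv.
        - unfold Q2R at 3; simpl. field.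
        - discriminate. }
      destruct (Rle_dec x (Q2R m)).
      * apply (IH l m H1 Hl); lra.
      * apply (IH m r H2); lra.
Qed.

Fixpoint pshift (p : list Q) (l : Q) : list Q :=
  match p with
  | nil => nil
  | c :: q => let Q := pshift q l in padd [c] (padd (pscale l Q) (0%Q :: Q))
  end.

Lemma peval_shift p l s : peval (pshift p l) s = peval p (Q2R l + s).
Proof.
  induction p as [|c q IH]; [reflexivity|]. cbn [pshift].
  rewrite !peval_add, peval_scale. cbn [peval]. rewrite IH, Q2R0. rg.
Qed.

Fixpoint chk2 (n : nat) (p : list Q) (l r : Q) : bool :=
  if negb (Qle_bool (fst (lbub (pshift p l) 0 (Qred (r - l)))) 0) then true else
  match n with
  | O => false
  | S n' => let m := Qred ((l + r) / 2) in if chk2 n' p l m then chk2 n' p m r else false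
  end.

Lemma chk2_correct n p l r : chk2 n p l r = true ->
  forall x, Q2R l <= x <= Q2R r -> 0 < peval p x.
Proof.
  revert l r; induction n as [|n IH]; intros l r H x Hx; cbn [chk2] in H.
  - destruct (negb _) eqn:H' in H; [|discriminate]. clear H. rename H' into H.
    apply Bool.negb_true_iff in H.
    assert (~ (fst (lbub (pshift p l) 0 (Qred (r - l))) <= 0)%Q) by (intro K; apply Qle_bool_iff in K; congruence).
    apply Qnot_le_lt, Qlt_Rlt in H0. rewrite Q2R0 in H0.
    assert (B := lbub_correct (pshift p l) 0 (Qred (r - l)) (x - Q2R l)).
    rewrite Q2R0, (Qeq_eqR _ _ (Qred_correct _)), Q2R_minus, peval_shift in B.
    replace (Q2R l + (x - Q2R l)) with x in B by rg. 
    assert (0 <= 0) by lra. assert (0 <= x - Q2R l <= Q2R r - Q2R l) by lra. 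
    specialize (B H1 H2). lra.
  - destruct (negb _) eqn:H' in H.
    + clear H. rename H' into H. apply Bool.negb_true_iff in H.
      assert (~ (fst (lbub (pshift p l) 0 (Qred (r - l))) <= 0)%Q) by (intro K; apply Qle_bool_iff in K; congruence).
      apply Qnot_le_lt, Qlt_Rlt in H0. rewrite Q2R0 in H0.
      assert (B := lbub_correct (pshift p l) 0 (Qred (r - l)) (x - Q2R l)).
      rewrite Q2R0, (Qeq_eqR _ _ (Qred_correct _)), Q2R_minus, peval_shift in B.
      replace (Q2R l + (x - Q2R l)) with x in B by rg. 
      assert (0 <= 0) by lra. assert (0 <= x - Q2R l <= Q2R r - Q2R l) by lra. 
      specialize (B H1 H2). lra.
    + set (m := Qred ((l + r) / 2)) in *.
      destruct (chk2 n p l m) eqn:H1; [|discriminate]. rename H into H2.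
      assert (Em : Q2R m = (Q2R l + Q2R r) / 2).
      { unfold m; rewrite (Qeq_eqR _ _ (Qred_correct _)).
        unfold Qdiv; rewrite Q2R_mult, Q2R_plus, Q2R_inv.
        - unfold Q2R at 3; simpl. field.
        - discriminate. }
      destruct (Rle_dec x (Q2R m)).
      * apply (IH l m H1); lra.
      * apply (IH m r H2); lra.
Qed.

Fixpoint qfact (m : nat) : Q := match m with O => 1%Q | S k => ((Z.of_nat (S k) # 1) * qfact k)%Q end.
Fixpoint qsgn (i : nat) : Q := match i with O => 1%Q | S k => (- qsgn k)%Q end.
Fixpoint mono (k : nat) (c : Q) : list Q := match k with O => [c] | S k' => 0%Q :: mono k' c end.
Definition scoef (i : nat) : Q := (qsgn i / qfact (2 * i + 1))%Q.
Fixpoint sinlist (n : nat) : list Q :=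
  match n with O => mono 1 (scoef 0) | S m => padd (sinlist m) (mono (2 * S m + 1) (scoef (S m))) end.

Lemma peval_mono k c x : peval (mono k c) x = Q2R c * x ^ k.
Proof. induction k; simpl; rewrite ?IHk, ?Q2R0; rg. Qed.

Lemma qfact_INR m : INR (fact m) = Q2R (qfact m).
Proof.
  induction m; simpl qfact.
  - simpl. unfold Q2R; simpl; field.
  - rewrite fact_simpl, mult_INR, Q2R_mult, IHm. f_equal.
    unfold Q2R. cbn [Qnum Qden]. change (Z.pos (Pos.of_succ_nat m)) with (Z.of_nat (S m)).
    rewrite <- INR_IZR_INZ. field.
Qed.

Lemma qsgn_pow i : (-1) ^ i = Q2R (qsgn i).
Proof.
  induction i; simpl qsgn.
  - unfold Q2R; simpl; field.
  - rewrite Q2R_opp, <- IHi. simpl. rg.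
Qed.

Lemma qfact_pos m : 0 < Q2R (qfact m).
Proof. rewrite <- qfact_INR. apply lt_0_INR. apply lt_O_fact. Qed.

Lemma sin_term_Q x i : sin_term x i = peval (mono (2 * i + 1) (scoef i)) x.
Proof.
  rewrite peval_mono. unfold sin_term, scoef.
  unfold Qdiv. rewrite Q2R_mult, Q2R_inv.
  - rewrite <- qsgn_pow, <- qfact_INR. field. apply not_0_INR, fact_neq_0.
  - intro E. pose proof (qfact_pos (2*i+1)). rewrite (Qeq_eqR _ _ E), Q2R0 in H. lra.
Qed.

Lemma sin_approx_Q x n : sin_approx x n = peval (sinlist n) x.
Proof.
  induction n; unfold sin_approx in *; simpl sum_f_R0; simpl sinlist.
  - rewrite sin_term_Q. reflexivity.
  - rewrite peval_add, IHn, sin_term_Q. reflexivity.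
Qed.

Lemma sin_lb11 x : 0 <= x -> x <= 4 -> peval (sinlist 5) x <= sin x.
Proof. intros. rewrite <- sin_approx_Q. apply (pre_sin_bound x 2); lra. Qed.
Lemma sin_ub13 x : 0 <= x -> x <= 4 -> sin x <= peval (sinlist 6) x.
Proof. intros. rewrite <- sin_approx_Q. apply (pre_sin_bound x 2); lra. Qed.

Lemma PI_lb : Q2R (31415 # 10000) < PI.
Proof.
  destruct (Rlt_or_le (Q2R (31415 # 10000)) PI) as [H|H]; [exact H|].
  exfalso.
  assert (Hs : sin (Q2R (31415 # 10000)) <= 0).
  { destruct H as [H|E].
    - apply Rlt_le, sin_lt_0. lra. unfold Q2R in *; simpl in *; pose proof PI2_3_2; lra.
    - rewrite <- E, sin_PI; lra. }
  assert (Hp : 0 < peval (sinlist 9) (Q2R (31415 # 10000))).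
  { apply (chk_correct 0 (sinlist 9) (31415 # 10000) (31415 # 10000)).
    - vm_compute. reflexivity.
    - unfold Q2R; simpl; lra.
    - lra. }
  assert (Hl := pre_sin_bound (Q2R (31415 # 10000)) 4).
  rewrite !sin_approx_Q in Hl. simpl (2*4+1)%nat in Hl.
  assert (0 <= Q2R (31415 # 10000) <= 4) by (unfold Q2R; simpl; lra).
  destruct Hl; lra.
Qed.

Lemma PI_ub : PI < Q2R (31416 # 10000).
Proof.
  destruct (Rlt_or_le PI (Q2R (31416 # 10000))) as [H|H]; [exact H|].
  exfalso.
  assert (Hs : 0 <= sin (Q2R (31416 # 10000))).
  { apply sin_ge_0; [unfold Q2R; simpl; lra | exact H]. }
  assert (Hp : 0 < peval (pscale (-1) (sinlist 10)) (Q2R (31416 # 10000))).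
  { apply (chk_correct 0 _ (31416 # 10000) (31416 # 10000)).
    - vm_compute. reflexivity.
    - unfold Q2R; simpl; lra.
    - lra. }
  rewrite peval_scale in Hp.
  assert (Hl := pre_sin_bound (Q2R (31416 # 10000)) 4).
  rewrite !sin_approx_Q in Hl. simpl (2*(4+1))%nat in Hl.
  assert (0 <= Q2R (31416 # 10000) <= 4) by (unfold Q2R; simpl; lra).
  replace (Q2R (-1)) with (-1) in Hp by (unfold Q2R; simpl; field).
  destruct Hl; [lra|lra|]. lra.
Qed.

Lemma cont_of_derive (f : R -> R) (x l : R) : is_derive f x l -> continuous f x.
Proof. intro H. apply (ex_derive_continuous (K:=R_AbsRing) (V:=R_NormedModule)). exists l; exact H. Qed.

Lemma contpt_of_derive (f : R -> R) (x l : R) : is_derive f x l -> continuity_pt f x.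
Proof. intro H. apply continuity_pt_filterlim. apply (cont_of_derive f x l H). Qed.

Lemma deriv_nonpos (f df : R -> R) (a b : R) : a <= b ->
  (forall x, a <= x <= b -> is_derive f x (df x)) ->
  (forall x, a <= x <= b -> df x <= 0) -> f b <= f a.
Proof.
  intros Hab Hd Hs.
  destruct (MVT_gen f a b df) as [c [Hc E]].
  - intros x Hx. rewrite Rmin_left, Rmax_right in Hx by lra. apply Hd; lra.
  - intros x Hx. rewrite Rmin_left, Rmax_right in Hx by lra.
    apply (contpt_of_derive f x (df x)). apply Hd; lra.
  - rewrite Rmin_left, Rmax_right in Hc by lra.
    assert (df c <= 0) by (apply Hs; lra). nra.
Qed.

Lemma deriv_nonneg (f df : R -> R) (a b : R) : a <= b ->
  (forall x, a <= x <= b -> is_derive f x (df x)) ->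
  (forall x, a <= x <= b -> 0 <= df x) -> f a <= f b.
Proof.
  intros Hab Hd Hs.
  assert (H := deriv_nonpos (fun x => - f x) (fun x => - df x) a b Hab).
  assert (- f b <= - f a); [|lra].
  apply H.
  - intros x Hx. apply (is_derive_opp f x (df x)). apply Hd; lra.
  - intros x Hx. specialize (Hs x Hx). lra.
Qed.

Lemma deriv_zero_const (f : R -> R) (a b : R) :
  (forall x, is_derive f x 0) -> f a = f b.
Proof.
  intros Hd. destruct (Rle_dec a b).
  - apply Rle_antisym.
    + apply (deriv_nonneg f (fun _ => 0)); auto; intros; lra.
    + apply (deriv_nonpos f (fun _ => 0)); auto; intros; lra.
  - apply Rle_antisym.
    + apply (deriv_nonpos f (fun _ => 0)); auto; try lra; intros; lra.
    + apply (deriv_nonneg f (fun _ => 0)); auto; try lra; intros; lra.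
Qed.

Definition K (c u : R) : R := exp (c * cos u).
Definition Phi (c x : R) : R := RInt (K c) 0 x.
Definition Psi (c x : R) : R := RInt (Phi c) 0 x.

Lemma K_deriv c u : is_derive (K c) u (- c * sin u * K c u).
Proof. unfold K. auto_derive; [exact I|]. rg. Qed.

Lemma K_cont c u : continuous (K c) u.
Proof. exact (cont_of_derive _ _ _ (K_deriv c u)). Qed.

Lemma Phi_deriv c x : is_derive (Phi c) x (K c x).
Proof.
  apply (is_derive_RInt (K c) (Phi c) 0 x).
  - apply filter_forall. intros b. unfold Phi.
    apply (RInt_correct (V:=R_CompleteNormedModule)).
    apply (ex_RInt_continuous (V:=R_CompleteNormedModule)).
    intros; apply K_cont.
  - apply K_cont.
Qed.

Lemma Phi_cont c x : continuous (Phi c) x.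
Proof. exact (cont_of_derive _ _ _ (Phi_deriv c x)). Qed.

Lemma Psi_deriv c x : is_derive (Psi c) x (Phi c x).
Proof.
  apply (is_derive_RInt (Phi c) (Psi c) 0 x).
  - apply filter_forall. intros b. unfold Psi.
    apply (RInt_correct (V:=R_CompleteNormedModule)).
    apply (ex_RInt_continuous (V:=R_CompleteNormedModule)).
    intros; apply Phi_cont.
  - apply Phi_cont.
Qed.

Lemma Phi0 c : Phi c 0 = 0.
Proof. unfold Phi. rewrite RInt_point. reflexivity. Qed.
Lemma Psi0 c : Psi c 0 = 0.
Proof. unfold Psi. rewrite RInt_point. reflexivity. Qed.

Lemma Phi_odd c x : Phi c (- x) = - Phi c x.
Proof.
  assert (H : (fun y => Phi c (- y) + Phi c y) x = (fun y => Phi c (- y) + Phi c y) 0).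
  { apply (deriv_zero_const (fun y => Phi c (- y) + Phi c y)). intros y.
    replace 0 with (-1 * K c (- y) + K c y).
    2:{ unfold K; rewrite cos_neg; rg. }
    apply (is_derive_plus (fun y => Phi c (- y)) (Phi c)).
    - apply (is_derive_comp (Phi c) (fun y => - y) y (K c (- y)) (-1)).
      + apply Phi_deriv.
      + apply (is_derive_opp (fun y => y) y 1). apply (is_derive_id (K:=R_AbsRing)).
    - apply Phi_deriv. }
  simpl in H. rewrite Ropp_0, Phi0 in H. lra.
Qed.

Lemma Psi_even c x : Psi c (- x) = Psi c x.
Proof.
  assert (H : (fun y => Psi c (- y) - Psi c y) x = (fun y => Psi c (- y) - Psi c y) 0).
  { apply (deriv_zero_const (fun y => Psi c (- y) - Psi c y)). intros y.
    replace 0 with (-1 * Phi c (- y) - Phi c y).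
    2:{ rewrite Phi_odd; rg. }
    apply (is_derive_minus (fun y => Psi c (- y)) (Psi c)).
    - apply (is_derive_comp (Psi c) (fun y => - y) y (Phi c (- y)) (-1)).
      + apply Psi_deriv.
      + apply (is_derive_opp (fun y => y) y 1). apply (is_derive_id (K:=R_AbsRing)).
    - apply Psi_deriv. }
  simpl in H. rewrite Ropp_0, Psi0 in H. lra.
Qed.

Lemma Phi_2PI c : Phi c (2 * PI) = 2 * Phi c PI.
Proof.
  assert (H : (fun y => Phi c (2 * PI - y) + Phi c y) PI = (fun y => Phi c (2 * PI - y) + Phi c y) 0).
  { apply (deriv_zero_const (fun y => Phi c (2 * PI - y) + Phi c y)). intros y.
    replace 0 with (-1 * K c (2 * PI - y) + K c y).
    2:{ unfold K. replace (2 * PI - y) with (- y + 2 * INR 1 * PI) by (simpl; rg).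
        rewrite cos_period, cos_neg; rg. }
    apply (is_derive_plus (fun y => Phi c (2 * PI - y)) (Phi c)).
    - apply (is_derive_comp (Phi c) (fun y => 2 * PI - y) y (K c (2 * PI - y)) (-1)).
      + apply Phi_deriv.
      + auto_derive; [exact I|rg].
    - apply Phi_deriv. }
  simpl in H. rewrite Phi0 in H. replace (2 * PI - PI) with PI in H by rg.
  replace (2 * PI - 0) with (2 * PI) in H by rg. lra.
Qed.

Lemma inner_int c x th :
  RInt (fun b => exp (c * cos (x - b))) 0 th = Phi c x - Phi c (x - th).
Proof.
  apply is_RInt_unique.
  replace (Phi c x - Phi c (x - th)) with
    (minus ((fun b => - Phi c (x - b)) th) ((fun b => - Phi c (x - b)) 0)).
  2:{ unfold minus, plus, opp; simpl. replace (x - 0) with x by rg. rg. }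
  apply (is_RInt_derive (fun b => - Phi c (x - b)) (fun b => exp (c * cos (x - b)))).
  - intros y _.
    replace (exp (c * cos (x - y))) with (- (-1 * K c (x - y))) by (unfold K; rg).
    apply (is_derive_opp (fun b => Phi c (x - b))).
    apply (is_derive_comp (Phi c) (fun b => x - b) y (K c (x - y)) (-1)).
    + apply Phi_deriv.
    + auto_derive; [exact I|rg].
  - intros y _. apply (continuous_comp (fun b => x - b) (K c)).
    + apply (cont_of_derive _ _ (-1)). auto_derive; [exact I|rg].
    + apply K_cont.
Qed.

Lemma double_int c th :
  RInt (fun a => RInt (fun b => exp (c * cos (a - b))) 0 th) 0 th = 2 * Psi c th.
Proof.
  rewrite (RInt_ext _ (fun a => Phi c a - Phi c (a - th))).
  2:{ intros x _. apply inner_int. }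
  apply is_RInt_unique.
  replace (2 * Psi c th) with
    (minus ((fun a => Psi c a - Psi c (a - th)) th) ((fun a => Psi c a - Psi c (a - th)) 0)).
  2:{ unfold minus, plus, opp; simpl. replace (th - th) with 0 by rg.
      replace (0 - th) with (- th) by rg. rewrite Psi_even, Psi0. rg. }
  apply (is_RInt_derive (fun a => Psi c a - Psi c (a - th))).
  - intros y _.
    apply (is_derive_minus (Psi c) (fun a => Psi c (a - th))).
    + apply Psi_deriv.
    + replace (Phi c (y - th)) with (1 * Phi c (y - th)) by rg.
      apply (is_derive_comp (Psi c) (fun a => a - th) y (Phi c (y - th)) 1).
      * apply Psi_deriv.
      * auto_derive; [exact I|rg].
  - intros y _. apply (continuous_minus (Phi c) (fun a => Phi c (a - th))).
    + apply Phi_cont.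
    + apply (continuous_comp (fun a => a - th) (Phi c)).
      * apply (cont_of_derive _ _ 1). auto_derive; [exact I|rg].
      * apply Phi_cont.
Qed.

Section Conv.
Variables (G G1 G2 : R -> R).
Hypothesis HG : forall z, is_derive G z (G1 z).
Hypothesis HG1 : forall z, is_derive G1 z (G2 z).

Lemma mvt_G x y : x <= y -> exists z, x <= z <= y /\ G y - G x = G1 z * (y - x).
Proof.
  intros Hxy. destruct (MVT_gen G x y G1) as [z [Hz E]].
  - intros; apply HG.
  - intros; apply (contpt_of_derive _ _ _ (HG x0)).
  - rewrite Rmin_left, Rmax_right in Hz by lra. exists z; split; [lra|exact E].
Qed.

Lemma push p x y r : p <= x -> x <= y -> y <= r -> x - p = r - y ->
  (forall z, p <= z <= r -> 0 <= G2 z) -> G x + G y <= G p + G r.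
Proof.
  intros H1 H2 H3 E Hs.
  destruct (mvt_G p x H1) as [z1 [Hz1 E1]].
  destruct (mvt_G y r H3) as [z2 [Hz2 E2]].
  assert (G1 z1 <= G1 z2).
  { apply (deriv_nonneg G1 G2 z1 z2); [lra| |].
    - intros; apply HG1.
    - intros; apply Hs; lra. }
  assert (0 <= x - p) by lra. nra.
Qed.

Lemma pushc p x y r : p <= x -> x <= y -> y <= r -> x - p = r - y ->
  (forall z, p <= z <= r -> G2 z <= 0) -> G p + G r <= G x + G y.
Proof.
  intros H1 H2 H3 E Hs.
  destruct (mvt_G p x H1) as [z1 [Hz1 E1]].
  destruct (mvt_G y r H3) as [z2 [Hz2 E2]].
  assert (G1 z2 <= G1 z1).
  { apply (deriv_nonpos G1 G2 z1 z2); [lra| |].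
    - intros; apply HG1.
    - intros; apply Hs; lra. }
  assert (0 <= x - p) by lra. nra.
Qed.

Lemma mid x y : x <= y -> (forall z, x <= z <= y -> G2 z <= 0) ->
  G x + G y <= 2 * G ((x + y) / 2).
Proof.
  intros Hxy Hs. assert (H := pushc x ((x+y)/2) ((x+y)/2) y). 
  replace (2 * G ((x + y) / 2)) with (G ((x+y)/2) + G ((x+y)/2)) by rg.
  apply H; try lra. exact Hs.
Qed.

Hypothesis HC : continuity G2.
Hypothesis Hdec : forall x y, 0 <= x -> x <= y -> y <= PI -> G2 y <= G2 x.

Lemma reduce t1 t2 t3 : 0 <= t1 -> t1 <= t2 -> t2 <= t3 -> t3 <= PI ->
  t1 + t2 + t3 = 2 * PI ->
  exists t, 0 <= t <= PI /\ G t1 + G t2 + G t3 <= G t + 2 * G (PI - t / 2).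
Proof.
  intros H1 H2 H3 H4 Hs.
  destruct (Rle_dec (G2 t2) 0) as [C1|C1].
  - exists t1. split; [lra|].
    assert (G t2 + G t3 <= 2 * G ((t2 + t3) / 2)).
    { apply mid; [lra|]. intros z Hz. assert (G2 z <= G2 t2) by (apply Hdec; lra). lra. }
    replace (PI - t1 / 2) with ((t2 + t3) / 2) by lra. lra.
  - destruct (Rle_dec 0 (G2 t3)) as [C2|C2].
    + exists (t1 + t2 - t3). split; [lra|].
      assert (G t1 + G t2 <= G (t1 + t2 - t3) + G t3).
      { apply push; try lra. intros z Hz. assert (G2 t3 <= G2 z) by (apply Hdec; lra). lra. }
      replace (PI - (t1 + t2 - t3) / 2) with t3 by lra. lra.
    + destruct (IVT_gen G2 t2 t3 0 HC) as [u0 [Hu0 E0]].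
      { rewrite Rmin_right, Rmax_left by lra. lra. }
      rewrite Rmin_left, Rmax_right in Hu0 by lra.
      exists (t1 + t2 - u0). split; [lra|].
      assert (G t1 + G t2 <= G (t1 + t2 - u0) + G u0).
      { apply push; try lra. intros z Hz. assert (G2 u0 <= G2 z) by (apply Hdec; lra). lra. }
      assert (G u0 + G t3 <= 2 * G ((u0 + t3) / 2)).
      { apply mid; [lra|]. intros z Hz. assert (G2 z <= G2 u0) by (apply Hdec; lra). lra. }
      replace (PI - (t1 + t2 - u0) / 2) with ((u0 + t3) / 2) by lra. lra.
Qed.
End Conv.

Section HLemma.
Variables (H H1 H2 : R -> R) (a : R).
Hypothesis HH : forall z, is_derive H z (H1 z).
Hypothesis HH1 : forall z, is_derive H1 z (H2 z).
Hypothesis HC : continuity H2.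
Hypothesis Ha : 0 < a.
Hypothesis Hdec : forall x y, 0 <= x -> x <= y -> y <= a -> H2 y <= H2 x.
Hypothesis H0a : H 0 <= H a.
Hypothesis H1a : H1 a = 0.

Lemma H1_ge_right u : 0 <= u -> u <= a -> H2 u <= 0 -> forall t, u <= t <= a -> 0 <= H1 t.
Proof.
  intros Hu Hua Hs t Ht. rewrite <- H1a.
  apply (deriv_nonpos H1 H2 t a); [lra| intros; apply HH1 |].
  intros z Hz. assert (H2 z <= H2 u) by (apply Hdec; lra). lra.
Qed.

Lemma H_le_right u : 0 <= u -> u <= a -> H2 u <= 0 -> forall t, u <= t <= a -> H t <= H a.
Proof.
  intros Hu Hua Hs t Ht.
  apply (deriv_nonneg H H1 t a); [lra| intros; apply HH |].
  intros z Hz. apply (H1_ge_right u); lra.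
Qed.

Lemma H_le_left t : 0 <= t <= a -> H t <= H a.
Proof.
  intros Ht.
  destruct (Rle_dec (H2 0) 0) as [C1|C1].
  - apply (H_le_right 0); lra.
  - destruct (Rle_dec 0 (H2 a)) as [C2|C2].
    + (* H2 >= 0 on [0,a] : H1 <= 0 *)
      assert (H3 : forall z, 0 <= z <= a -> H1 z <= 0).
      { intros z Hz. rewrite <- H1a. apply (deriv_nonneg H1 H2 z a); [lra| intros; apply HH1 |].
        intros w Hw. assert (H2 a <= H2 w) by (apply Hdec; lra). lra. }
      assert (H t <= H 0).
      { apply (deriv_nonpos H H1 0 t); [lra| intros; apply HH |]. intros; apply H3; lra. }
      lra.
    + destruct (IVT_gen H2 0 a 0 HC) as [u [Hu Eu]].
      { rewrite Rmin_right, Rmax_left by lra. lra. }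
      rewrite Rmin_left, Rmax_right in Hu by lra.
      destruct (Rle_dec u t) as [C3|C3].
      * apply (H_le_right u); lra.
      * destruct (Rle_dec (H1 t) 0) as [C4|C4].
        -- assert (H t <= H 0).
           { apply (deriv_nonpos H H1 0 t); [lra| intros; apply HH |].
             intros z Hz. assert (H1 z <= H1 t); [|lra].
             apply (deriv_nonneg H1 H2 z t); [lra| intros; apply HH1 |].
             intros w Hw. assert (H2 u <= H2 w) by (apply Hdec; lra). lra. }
           lra.
        -- assert (H t <= H u).
           { apply (deriv_nonneg H H1 t u); [lra| intros; apply HH |].
             intros z Hz. assert (H1 t <= H1 z); [|lra].
             apply (deriv_nonneg H1 H2 t z); [lra| intros; apply HH1 |].
             intros w Hw. assert (H2 u <= H2 w) by (apply Hdec; lra). lra. }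
           assert (H u <= H a) by (apply (H_le_right u); lra). lra.
Qed.
End HLemma.

Lemma H_le_far (H H1 H2 : R -> R) a b :
  (forall z, is_derive H z (H1 z)) -> (forall z, is_derive H1 z (H2 z)) ->
  H1 a = 0 -> (forall z, a <= z <= b -> H2 z <= 0) ->
  forall t, a <= t <= b -> H t <= H a.
Proof.
  intros HH HH1 H1a Hs t Ht.
  apply (deriv_nonpos H H1 a t); [lra| intros; apply HH |].
  intros z Hz. rewrite <- H1a. apply (deriv_nonpos H1 H2 a z); [lra| intros; apply HH1 |].
  intros; apply Hs; lra.
Qed.

Open Scope Q_scope.
Definition P1q : Q := 31415 # 10000.
Definition P2q : Q := 31416 # 10000.
Definition gq : Q := 1051 # 10000.
Definition s11 := sinlist 5.
Definition s13 := sinlist 6.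
Definition t11 := tl s11.
Definition Z1L : list Q := [0; (14117 # 100000); (5379 # 50000); (-50573 # 100000); (26443 # 100000); (-723 # 20000)].
Definition Z1R : list Q := [(108273 # 20000); (-610067 # 100000); (77139 # 100000); (117209 # 100000); (-11907 # 25000); (529 # 10000)].
Definition Z2 : list Q := [0; (-80191 # 100000); (2793 # 4000); (-3081 # 4000); (39729 # 100000); (-6291 # 100000)].
Definition Q2 : list Q := [(-80191 # 100000); (2793 # 4000); (-3081 # 4000); (39729 # 100000); (-6291 # 100000)].
Definition lamlo : Q := ((842 # 1000) * P1q / 3)%Q.
Definition poly2L := padd (pderiv Z2) (padd [lamlo; -1]%Q (pscale (-3 # 2) (pmul Z2 s11))).
Definition poly2R := padd (pderiv Z2) (padd [(lamlo - 2 * P2q)%Q; 2%Q] (pscale (-3 # 2) (pmul Z2 s11))).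
Definition omlo : list Q := [0; (P1q / 3)%Q; (-1 # 2)].
Definition omR : list Q := pmul [(-2 * P1q / 3)%Q; 1%Q] [P2q; (-1)%Q].
Definition PAL := padd (pderiv Z1L) (padd [(- gq * P2q / 3)%Q] (pmul omlo s11)).
Definition PBL := padd PAL (pscale (-3 # 2) (0%Q :: Z1L)).
Definition PAR := padd (pderiv Z1R) (padd [(- gq * P2q / 3)%Q] (pscale (-1) (pmul omR s13))).
Definition PBR := padd PAR (pscale (-3 # 2) (0%Q :: Z1R)).
Definition diffa := padd Z1R (pscale (-1) Z1L).
Definition negpi := pscale (-1) Z1R.

Definition AL : Q := 20945 # 10000.
Definition AR : Q := 20943 # 10000.

Lemma c1 : chk2 12 poly2L 0 AL = true. Proof. vm_compute. reflexivity. Qed.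
Lemma c2 : chk2 12 poly2R AR P2q = true. Proof. vm_compute. reflexivity. Qed.
Lemma c3 : chk2 12 (pscale (-1) Q2) 0 P2q = true. Proof. vm_compute. reflexivity. Qed.
Lemma c4 : chk2 12 PAL 0 AL = true. Proof. vm_compute. reflexivity. Qed.
Lemma c5 : chk2 12 PBL 0 AL = true. Proof. vm_compute. reflexivity. Qed.
Lemma c6 : chk2 12 PAR AR P2q = true. Proof. vm_compute. reflexivity. Qed.
Lemma c7 : chk2 12 PBR AR P2q = true. Proof. vm_compute. reflexivity. Qed.
Lemma c8 : chk2 12 diffa AR AL = true. Proof. vm_compute. reflexivity. Qed.
Lemma c9 : chk2 12 negpi P1q P2q = true. Proof. vm_compute. reflexivity. Qed.
Lemma c10 : chk2 12 t11 0 AL = true. Proof. vm_compute. reflexivity. Qed.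

Close Scope Q_scope.
Open Scope R_scope.

Ltac qc := unfold Q2R; simpl Qnum; simpl Qden; intros; try lra.

Lemma a_bounds : Q2R AR <= 2 * PI / 3 <= Q2R AL.
Proof. pose proof PI_lb; pose proof PI_ub. unfold AR, AL, P1q, P2q in *. revert H H0. qc. Qed.

Lemma sin_nonneg u : 0 <= u <= PI -> 0 <= sin u.
Proof. intros; apply sin_ge_0; lra. Qed.

Lemma sin_le_id u : 0 <= u -> sin u <= u.
Proof. intros H. destruct H as [H|H]. apply Rlt_le, sin_lt_x; lra. subst; rewrite sin_0; lra. Qed.

Lemma peval_cons c q x : peval (c :: q) x = Q2R c + x * peval q x.
Proof. reflexivity. Qed.

Lemma s11_split u : peval s11 u = u * peval t11 u.
Proof.
  assert (E : s11 = (0%Q) :: t11) by (vm_compute; reflexivity).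
  rewrite E, peval_cons, Q2R0; field.
Qed.

Lemma qvals : Q2R AR = 20943/10000 /\ Q2R AL = 20945/10000 /\ Q2R P1q = 31415/10000 /\ Q2R P2q = 31416/10000.
Proof. unfold AR, AL, P1q, P2q. repeat split; qc. Qed.

Lemma PI_b : 3.1415 < PI < 3.1416.
Proof. pose proof PI_lb; pose proof PI_ub. unfold P1q, P2q in *. revert H H0. qc. Qed.

Lemma pos_of n p l r x : chk2 n p l r = true -> Q2R l <= x <= Q2R r -> 0 < peval p x.
Proof. intros H Hx; exact (chk2_correct n p l r H x Hx). Qed.

Definition z2 (u : R) := peval Z2 u.
Definition dz2 (u : R) := peval (pderiv Z2) u.

Lemma z2_nonpos u : 0 <= u <= PI -> z2 u <= 0.
Proof.
  intros Hu. pose proof PI_b as HPI.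
  assert (Hc := pos_of 12 (pscale (-1) Q2) 0 P2q u c3).
  rewrite peval_scale in Hc.
  assert (E : z2 u = u * peval Q2 u) by (unfold z2, Z2, Q2; rewrite peval_cons, Q2R0; rg).
  rewrite E. assert (Em : Q2R (-1) = -1) by qc. rewrite Em in Hc.
  assert (0 < -1 * peval Q2 u). { apply Hc. unfold P2q. split; qc. } nra.
Qed.

Lemma poly2L_eq u : peval poly2L u = dz2 u + Q2R lamlo - u + (-3/2) * z2 u * peval s11 u.
Proof.
  unfold poly2L, dz2, z2. rewrite !peval_add, peval_scale, peval_mul.
  rewrite !peval_cons. cbn [peval]. assert (Q2R (-1) = -1) by qc.
  assert (Q2R (-3 # 2) = -3/2) by qc. rewrite ?H, ?H0, ?Q2R0. rg.
Qed.

Lemma poly2R_eq u : peval poly2R u = dz2 u + Q2R lamlo - 2 * Q2R P2q + 2 * u + (-3/2) * z2 u * peval s11 u.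
Proof.
  unfold poly2R, dz2, z2. rewrite !peval_add, peval_scale, peval_mul.
  rewrite !peval_cons. cbn [peval]. rewrite Q2R_minus, Q2R_mult.
  assert (Q2R 2 = 2) by qc.
  assert (Q2R (-3 # 2) = -3/2) by qc. rewrite ?H, ?H0, ?Q2R0. rg.
Qed.

Lemma lamlo_le : Q2R lamlo <= 842/1000 * PI / 3.
Proof. pose proof PI_lb. unfold lamlo, P1q in *. revert H. qc. Qed.

Lemma reg2_core c u : 3/2 <= c -> 0 <= u <= PI -> c * z2 u * sin u <= 3/2 * z2 u * peval s11 u.
Proof.
  intros Hc Hu. pose proof PI_b.
  assert (Z := z2_nonpos u Hu). assert (S0 := sin_nonneg u Hu).
  assert (S1 := sin_lb11 u (proj1 Hu) ltac:(lra)). change (sinlist 5) with s11 in S1.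
  assert (z2 u * sin u <= 0) by nra.
  assert (c * z2 u * sin u <= 3/2 * z2 u * sin u) by nra.
  assert (3/2 * z2 u * sin u <= 3/2 * z2 u * peval s11 u) by nra.
  lra.
Qed.

Lemma reg2_L c u : 3/2 <= c -> 0 <= u <= 2 * PI / 3 ->
  u - 842/1000 * PI / 3 - dz2 u + c * z2 u * sin u <= 0.
Proof.
  intros Hc Hu. pose proof PI_b. pose proof a_bounds.
  assert (P := pos_of 12 poly2L 0 AL u c1 ltac:(split; [qc|lra])).
  rewrite poly2L_eq in P. pose proof lamlo_le.
  pose proof (reg2_core c u Hc ltac:(lra)). lra.
Qed.

Lemma reg2_R c u : 3/2 <= c -> 2 * PI / 3 <= u <= PI ->
  2 * (PI - u) - 842/1000 * PI / 3 - dz2 u + c * z2 u * sin u <= 0.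
Proof.
  intros Hc Hu. pose proof PI_b. pose proof a_bounds. pose proof qvals.
  assert (P := pos_of 12 poly2R AR P2q u c2 ltac:(lra)).
  rewrite poly2R_eq in P. pose proof lamlo_le.
  pose proof (reg2_core c u Hc ltac:(lra)). lra.
Qed.

Lemma z2_0 : z2 0 = 0.
Proof. unfold z2, Z2. rewrite peval_cons, Q2R0. rg. Qed.
Lemma z2_PI : z2 PI <= 0.
Proof. pose proof PI_b. apply z2_nonpos; lra. Qed.
Lemma z2_deriv u : is_derive z2 u (dz2 u).
Proof. apply peval_deriv. Qed.

Definition gam : R := 1051/10000.
Definition lam1 (c : R) := PI / 3 * (1 - gam * c).
Definition zL (c u : R) := - (u * (PI / 3 - u / 2)) + c * peval Z1L u.
Definition dzL (c u : R) := - (PI / 3 - u) + c * peval (pderiv Z1L) u.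
Definition zR (c u : R) := (u - 2 * PI / 3) * (PI - u) + c * peval Z1R u.
Definition dzR (c u : R) := (PI - u) - (u - 2 * PI / 3) + c * peval (pderiv Z1R) u.

Lemma gq_val : Q2R gq = gam.
Proof. unfold gq, gam. qc. Qed.

Lemma PAL_eq u : peval PAL u = peval (pderiv Z1L) u - gam * Q2R P2q / 3
   + u * (Q2R P1q / 3 - u / 2) * peval s11 u.
Proof.
  unfold PAL, omlo. rewrite !peval_add, peval_mul. rewrite !peval_cons. cbn [peval].
  assert (E1 : Q2R (- gq * P2q / 3) = - gam * Q2R P2q / 3).
  { unfold Qdiv. rewrite !Q2R_mult, Q2R_opp, Q2R_inv, gq_val by discriminate.
    assert (Q2R 3 = 3) by qc. rewrite H. field. }
  assert (E2 : Q2R (P1q / 3) = Q2R P1q / 3).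
  { unfold Qdiv. rewrite Q2R_mult, Q2R_inv by discriminate. assert (Q2R 3 = 3) by qc. rewrite H. field. }
  assert (E3 : Q2R (-1 # 2) = - 1 / 2) by qc.
  rewrite E1, E2, E3, Q2R0. field.
Qed.

Lemma PBL_eq u : peval PBL u = peval PAL u - 3 / 2 * u * peval Z1L u.
Proof.
  unfold PBL. rewrite peval_add, peval_scale, peval_cons, Q2R0.
  assert (Q2R (-3 # 2) = -3/2) by qc. rewrite H. field.
Qed.

Lemma PAR_eq u : peval PAR u = peval (pderiv Z1R) u - gam * Q2R P2q / 3
   - (u - 2 * Q2R P1q / 3) * (Q2R P2q - u) * peval s13 u.
Proof.
  unfold PAR, omR. rewrite !peval_add, peval_scale, !peval_mul. rewrite !peval_cons. cbn [peval].
  assert (E1 : Q2R (- gq * P2q / 3) = - gam * Q2R P2q / 3).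
  { unfold Qdiv. rewrite !Q2R_mult, Q2R_opp, Q2R_inv, gq_val by discriminate.
    assert (Q2R 3 = 3) by qc. rewrite H. field. }
  assert (E2 : Q2R (-2 * P1q / 3) = -2 * Q2R P1q / 3).
  { unfold Qdiv. rewrite !Q2R_mult, Q2R_inv by discriminate. assert (Q2R 3 = 3) by qc.
    assert (Q2R (-2) = -2) by qc. rewrite H, H0. field. }
  assert (E3 : Q2R (-1) = - 1) by qc. assert (E4 : Q2R 1 = 1) by qc.
  rewrite E1, E2, E3, E4, ?Q2R0. field.
Qed.

Lemma PBR_eq u : peval PBR u = peval PAR u - 3 / 2 * u * peval Z1R u.
Proof.
  unfold PBR. rewrite peval_add, peval_scale, peval_cons, Q2R0.
  assert (Q2R (-3 # 2) = -3/2) by qc. rewrite H. field.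
Qed.

Lemma bracket_bound c z s A B : 0 < c <= 3/2 -> 0 <= s -> s <= B ->
  (z <= 0 -> 0 < A) -> (0 < z -> 0 < A - 3/2 * B * z) -> A - c * z * s > 0.
Proof.
  intros Hc Hs HsB HA HB.
  destruct (Rle_dec z 0) as [Z|Z].
  - specialize (HA Z). assert (z * s <= 0) by nra. nra.
  - assert (Z' : 0 < z) by lra. specialize (HB Z').
    assert (z * s <= z * B) by nra. assert (0 <= z * s) by nra.
    assert (c * (z * s) <= 3/2 * (z * s)) by nra. nra.
Qed.

Lemma reg1_L c u : 0 < c <= 3/2 -> 0 <= u <= 2 * PI / 3 ->
  u - lam1 c - dzL c u + c * zL c u * sin u <= 0.
Proof.
  intros Hc Hu. pose proof PI_b as HPI. pose proof a_bounds as Ha. pose proof qvals as Hq.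
  assert (S1 := sin_lb11 u (proj1 Hu) ltac:(lra)). change (sinlist 5) with s11 in S1.
  assert (S0 := sin_nonneg u ltac:(lra)). assert (Sx := sin_le_id u (proj1 Hu)).
  assert (T := pos_of 12 t11 0 AL u c10 ltac:(rewrite Q2R0; lra)).
  assert (Hs11 : 0 <= peval s11 u) by (rewrite s11_split; nra).
  set (Om := u * (PI / 3 - u / 2)).
  assert (HOm : 0 <= Om) by (unfold Om; nra).
  assert (HOmlo : u * (Q2R P1q / 3 - u / 2) <= Om) by (unfold Om; nra).
  assert (K1 : Om * peval s11 u <= Om * sin u) by nra.
  assert (K2 : u * (Q2R P1q / 3 - u / 2) * peval s11 u <= Om * peval s11 u) by nra.
  assert (PA := pos_of 12 PAL 0 AL u c4 ltac:(rewrite Q2R0; lra)).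
  assert (PB := pos_of 12 PBL 0 AL u c5 ltac:(rewrite Q2R0; lra)).
  rewrite PBL_eq in PB. rewrite PAL_eq in PA, PB.
  assert (Br : gam * PI / 3 - peval (pderiv Z1L) u - Om * sin u + c * peval Z1L u * sin u <= 0).
  { assert (G : gam * PI / 3 <= gam * Q2R P2q / 3) by (unfold gam; lra).
    assert (X := bracket_bound c (peval Z1L u) (sin u)
      (peval (pderiv Z1L) u - gam * Q2R P2q / 3 + u * (Q2R P1q / 3 - u / 2) * peval s11 u) u
      Hc S0 Sx (fun _ => PA)).
    assert (X' : peval (pderiv Z1L) u - gam * Q2R P2q / 3 + u * (Q2R P1q / 3 - u / 2) * peval s11 u
       - c * peval Z1L u * sin u > 0) by (apply X; intros; lra).
    lra. }
  assert (E : u - lam1 c - dzL c u + c * zL c u * sin u =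
    c * (gam * PI / 3 - peval (pderiv Z1L) u - Om * sin u + c * peval Z1L u * sin u)).
  { unfold lam1, dzL, zL, Om. field. }
  rewrite E. nra.
Qed.

Lemma reg1_R c u : 0 < c <= 3/2 -> 2 * PI / 3 <= u <= PI ->
  2 * (PI - u) - lam1 c - dzR c u + c * zR c u * sin u <= 0.
Proof.
  intros Hc Hu. pose proof PI_b as HPI. pose proof a_bounds as Ha. pose proof qvals as Hq.
  assert (S1 := sin_ub13 u ltac:(lra) ltac:(lra)). change (sinlist 6) with s13 in S1.
  assert (S0 := sin_nonneg u ltac:(lra)). assert (Sx := sin_le_id u ltac:(lra)).
  set (Om := (u - 2 * PI / 3) * (PI - u)).
  assert (HOm : 0 <= Om) by (unfold Om; nra).
  assert (HOmhi : Om <= (u - 2 * Q2R P1q / 3) * (Q2R P2q - u)).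
  { unfold Om. assert (0 <= u - 2 * PI / 3) by lra. assert (0 <= PI - u) by lra. nra. }
  assert (K1 : Om * sin u <= Om * peval s13 u) by nra.
  assert (K2 : Om * peval s13 u <= (u - 2 * Q2R P1q / 3) * (Q2R P2q - u) * peval s13 u) by nra.
  assert (PA := pos_of 12 PAR AR P2q u c6 ltac:(lra)).
  assert (PB := pos_of 12 PBR AR P2q u c7 ltac:(lra)).
  rewrite PBR_eq in PB. rewrite PAR_eq in PA, PB.
  assert (Br : gam * PI / 3 - peval (pderiv Z1R) u + Om * sin u + c * peval Z1R u * sin u <= 0).
  { assert (G : gam * PI / 3 <= gam * Q2R P2q / 3) by (unfold gam; lra).
    assert (X := bracket_bound c (peval Z1R u) (sin u)
      (peval (pderiv Z1R) u - gam * Q2R P2q / 3 - (u - 2 * Q2R P1q / 3) * (Q2R P2q - u) * peval s13 u) u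
      Hc S0 Sx (fun _ => PA)).
    assert (X' : peval (pderiv Z1R) u - gam * Q2R P2q / 3 - (u - 2 * Q2R P1q / 3) * (Q2R P2q - u) * peval s13 u
       - c * peval Z1R u * sin u > 0) by (apply X; intros; lra).
    lra. }
  assert (E : 2 * (PI - u) - lam1 c - dzR c u + c * zR c u * sin u =
    c * (gam * PI / 3 - peval (pderiv Z1R) u + Om * sin u + c * peval Z1R u * sin u)).
  { unfold lam1, dzR, zR, Om. field. }
  rewrite E. nra.
Qed.

Lemma zL_0 c : zL c 0 = 0.
Proof. unfold zL, Z1L. rewrite peval_cons, Q2R0. rg. Qed.

Lemma zL_zR_a c : 0 < c -> zL c (2 * PI / 3) <= zR c (2 * PI / 3).
Proof.
  intros Hc. pose proof a_bounds. pose proof qvals.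
  assert (D := pos_of 12 diffa AR AL (2 * PI / 3) c8 H).
  unfold diffa in D. rewrite peval_add, peval_scale in D.
  assert (Q2R (-1) = -1) by qc.
  unfold zL, zR. replace (2 * PI / 3 * (PI / 3 - 2 * PI / 3 / 2)) with 0 by field.
  replace ((2 * PI / 3 - 2 * PI / 3) * (PI - 2 * PI / 3)) with 0 by rg. nra.
Qed.

Lemma zR_PI c : 0 < c -> zR c PI <= 0.
Proof.
  intros Hc. pose proof PI_b. pose proof qvals.
  assert (D := pos_of 12 negpi P1q P2q PI c9 ltac:(lra)).
  unfold negpi in D. rewrite peval_scale in D.
  assert (Q2R (-1) = -1) by qc.
  unfold zR. replace (PI - PI) with 0 by rg. nra.
Qed.

Lemma zL_deriv c u : is_derive (zL c) u (dzL c u).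
Proof.
  unfold zL, dzL.
  apply (is_derive_plus (fun u => - (u * (PI / 3 - u / 2))) (fun u => c * peval Z1L u)).
  - auto_derive; [exact I|field].
  - apply (is_derive_scal (peval Z1L) u c). apply peval_deriv.
Qed.

Lemma zR_deriv c u : is_derive (zR c) u (dzR c u).
Proof.
  unfold zR, dzR.
  apply (is_derive_plus (fun u => (u - 2 * PI / 3) * (PI - u)) (fun u => c * peval Z1R u)).
  - auto_derive; [exact I|field].
  - apply (is_derive_scal (peval Z1R) u c). apply peval_deriv.
Qed.

Lemma isd_plus (f g : R -> R) (x df dg : R) : is_derive f x df -> is_derive g x dg ->
  is_derive (fun t => f t + g t) x (df + dg).
Proof. intros; apply (is_derive_plus f g); auto. Qed.
Lemma isd_minus (f g : R -> R) (x df dg : R) : is_derive f x df -> is_derive g x dg ->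
  is_derive (fun t => f t - g t) x (df - dg).
Proof. intros; apply (is_derive_minus f g); auto. Qed.
Lemma isd_mult (f g : R -> R) (x df dg : R) : is_derive f x df -> is_derive g x dg ->
  is_derive (fun t => f t * g t) x (df * g x + f x * dg).
Proof. intros; apply (is_derive_mult f g); auto. intros; apply Rmult_comm. Qed.
Lemma isd_ext (f : R -> R) (x d1 d2 : R) : d1 = d2 -> is_derive f x d1 -> is_derive f x d2.
Proof. intros ->; auto. Qed.
Lemma isd_fext (f g : R -> R) (x d : R) : (forall t, f t = g t) -> is_derive f x d -> is_derive g x d.
Proof. intros E H. apply (is_derive_ext f g); auto. Qed.
Lemma isd_id (x : R) : is_derive (fun t => t) x 1.
Proof. exact (is_derive_id (K:=R_AbsRing) x). Qed.
Lemma isd_const (a x : R) : is_derive (fun _ => a) x 0.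
Proof. exact (is_derive_const (K:=R_AbsRing) (V:=R_NormedModule) a x). Qed.

Section KLsec.
Variable c : R.
Let a := 2 * PI / 3.

Lemma KL lam (zL dzL zR dzR : R -> R) :
  (forall u, is_derive zL u (dzL u)) -> (forall u, is_derive zR u (dzR u)) ->
  (forall u, 0 <= u <= a -> u - lam - dzL u + c * zL u * sin u <= 0) ->
  (forall u, a <= u <= PI -> 2 * (PI - u) - lam - dzR u + c * zR u * sin u <= 0) ->
  zL 0 = 0 -> zL a <= zR a -> zR PI <= 0 ->
  2 * Psi c PI - 3 * Psi c a <= lam * Phi c PI.
Proof.
  intros HL HR CL CR Z0 Za Zpi.
  assert (Hp : 0 < a < PI) by (unfold a; pose proof PI_RGT_0; lra).
  set (P1 := fun u => u * Phi c u - Psi c u - lam * Phi c u - zL u * K c u).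
  set (P2 := fun u => 2 * (PI - u) * Phi c u + 2 * Psi c u - lam * Phi c u - zR u * K c u).
  assert (A1 : P1 a <= P1 0).
  { apply (deriv_nonpos P1 (fun u => K c u * (u - lam - dzL u + c * zL u * sin u))); [lra| |].
    - intros u _. unfold P1.
      eapply isd_ext; [|apply isd_minus; [apply isd_minus; [apply isd_minus;
         [apply isd_mult; [apply isd_id|apply Phi_deriv]|apply Psi_deriv]|
          apply (is_derive_scal (Phi c) u lam); apply Phi_deriv]|
          apply isd_mult; [apply HL|apply K_deriv]]].
      unfold scal; simpl; unfold mult; simpl. rg.
    - intros u Hu. assert (0 < K c u) by apply exp_pos.
      specialize (CL u Hu). nra. }
  assert (A2 : P2 PI <= P2 a).
  { apply (deriv_nonpos P2 (fun u => K c u * (2 * (PI - u) - lam - dzR u + c * zR u * sin u))); [lra| |].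
    - intros u _. unfold P2.
      assert (D2 : is_derive (fun u => 2 * (PI - u)) u (-2)) by (auto_derive; [exact I|rg]).
      eapply isd_ext; [|apply isd_minus; [apply isd_minus; [apply isd_plus;
         [apply isd_mult; [apply D2|apply Phi_deriv]|
          apply (is_derive_scal (Psi c) u 2); apply Psi_deriv]|
          apply (is_derive_scal (Phi c) u lam); apply Phi_deriv]|
          apply isd_mult; [apply HR|apply K_deriv]]].
      unfold scal; simpl; unfold mult; simpl. rg.
    - intros u Hu. assert (0 < K c u) by apply exp_pos.
      specialize (CR u Hu). nra. }
  unfold P1, P2 in A1, A2.
  rewrite Phi0, Psi0, Z0 in A1.
  assert (Kpi : 0 < K c PI) by apply exp_pos.
  assert (Ka : 0 < K c a) by apply exp_pos.
  replace (PI - PI) with 0 in A2 by rg.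
  assert (zR PI * K c PI <= 0) by nra.
  assert (zL a * K c a <= zR a * K c a) by nra.
  unfold a in *. lra.
Qed.
End KLsec.

Lemma exp_mono x y : x <= y -> exp x <= exp y.
Proof. intros [H|H]; [apply Rlt_le, exp_increasing; auto | subst; lra]. Qed.

Lemma K_dec c x y : 0 < c -> 0 <= x -> x <= y -> y <= PI -> K c y <= K c x.
Proof.
  intros Hc H1 H2 H3. unfold K. apply exp_mono.
  destruct H2 as [H2|H2]; [|subst; lra].
  assert (cos y < cos x) by (apply cos_decreasing_1; lra). nra.
Qed.

Lemma Phi_PI_ge c : PI <= Phi c PI.
Proof.
  assert (H := deriv_nonneg (fun x => Phi c x - x - c * sin x) (fun x => K c x - 1 - c * cos x) 0 PI).
  cbv beta in H. rewrite Phi0, sin_0, sin_PI in H.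
  assert (0 - 0 - c * 0 <= Phi c PI - PI - c * 0); [|lra].
  apply H.
  - pose proof PI_RGT_0; lra.
  - intros x _. apply isd_minus; [apply isd_minus; [apply Phi_deriv|apply isd_id]|].
    auto_derive; [exact I|rg].
  - intros x _. unfold K. pose proof (exp_ineq1_le (c * cos x)). lra.
Qed.

Lemma F_eq c th : F c th = Psi c th / (2 * PI * Phi c PI) - (th / (2 * PI)) ^ 2.
Proof.
  unfold F. rewrite double_int.
  change (RInt (fun a => exp (c * cos a)) 0 (2 * PI)) with (Phi c (2 * PI)).
  rewrite Phi_2PI. pose proof (Phi_PI_ge c). pose proof PI_RGT_0.
  f_equal. field. lra.
Qed.

Lemma cos_2PI3 : cos (2 * PI / 3) = - 1 / 2.
Proof.
  replace (2 * PI / 3) with (PI - PI / 3) by field.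
  rewrite Rtrigo_facts.cos_pi_minus, cos_PI3. field.
Qed.

Lemma H2dec_aux c t : 0 < c -> 0 <= t <= 2 * PI / 3 ->
  - c * sin t * K c t + c / 4 * sin (PI - t / 2) * K c (PI - t / 2) <= 0.
Proof.
  intros Hc Ht. pose proof PI_RGT_0 as HP.
  set (s := sin (t / 2)). set (x := cos (t / 2)).
  assert (Hs : 0 <= s) by (apply sin_ge_0; lra).
  assert (Hx : 1 / 2 <= x).
  { rewrite <- cos_PI3. unfold x. destruct (Req_dec (t/2) (PI/3)) as [E|E].
    - rewrite E; lra.
    - apply Rlt_le, cos_decreasing_1; lra. }
  assert (Ex1 : x <= 1) by apply COS_bound.
  assert (E1 : sin t = 2 * s * x) by (unfold s, x; rewrite <- sin_2a; f_equal; field).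
  assert (E2 : sin (PI - t / 2) = s) by (apply sin_PI_x).
  assert (E3 : cos t = 2 * x * x - 1) by (unfold x; rewrite <- cos_2a_cos; f_equal; field).
  assert (E4 : cos (PI - t / 2) = - x) by (apply Rtrigo_facts.cos_pi_minus).
  assert (Kc : K c (PI - t / 2) <= K c t).
  { unfold K. apply exp_mono. rewrite E3, E4. assert (0 <= 2 * x * x + x - 1) by nra. nra. }
  assert (Kp : 0 < K c t) by apply exp_pos.
  assert (Kp' : 0 < K c (PI - t / 2)) by apply exp_pos.
  rewrite E1, E2.
  assert (0 <= c * s) by nra.
  assert (c * s * K c (PI - t / 2) <= c * s * K c t) by nra.
  assert (0 <= c * s * K c t) by nra.
  assert (c * s * K c t <= 2 * x * (c * s * K c t)) by nra.
  nra.
Qed.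

Section Main.
Variables c Cst : R.
Hypothesis hc : 0 < c.
Hypothesis hC : Cst <= 0.158.
Hypothesis hKL : 2 * Psi c PI - 3 * Psi c (2 * PI / 3) <= PI / 3 * (1 - Cst) * Phi c PI.
Hypothesis hexp : exp (- c / 2) + 1 / 2 <= 3 / 2 * (1 - Cst).

Definition a := 2 * PI / 3.
Definition mu := (1 - Cst) * Phi c PI / (2 * PI).
Definition G t := Psi c t - (Phi c a * t + mu * (t - a) ^ 2).
Definition G1 t := Phi c t - (Phi c a + mu * (2 * (t - a))).
Definition G2 t := K c t - 2 * mu.
Definition H t := G t + 2 * G (PI - t / 2).
Definition H1 t := G1 t - G1 (PI - t / 2).
Definition H2 t := G2 t + G2 (PI - t / 2) / 2.

Lemma PIpos : 0 < PI. Proof. exact PI_RGT_0. Qed.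

Lemma dG t : is_derive G t (G1 t).
Proof. unfold G, G1. apply isd_minus; [apply Psi_deriv|]. auto_derive; [exact I|]. change (Phi c a * 1 + mu * (1 * ((1 + 1) * ((t + - a) * 1))) = Phi c a + mu * (2 * (t - a))). rg. Qed.
Lemma dG1 t : is_derive G1 t (G2 t).
Proof. unfold G1, G2. apply (isd_ext _ _ (K c t - mu * 2)); [unfold G2; rg|].
  apply isd_minus; [apply Phi_deriv|]. auto_derive; [exact I|]. rg. Qed.
Lemma dG2 t : is_derive G2 t (- c * sin t * K c t).
Proof. unfold G2. apply (isd_ext _ _ (- c * sin t * K c t - 0)); [unfold G2; rg|].
  apply isd_minus; [apply K_deriv|apply isd_const]. Qed.

Lemma dcomp (f : R -> R) df t : (forall z, is_derive f z (df z)) ->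
  is_derive (fun t => f (PI - t / 2)) t (- 1 / 2 * df (PI - t / 2)).
Proof.
  intros Hf. apply (isd_ext _ _ (scal (-1/2) (df (PI - t / 2)))); [reflexivity|].
  apply (is_derive_comp f (fun t => PI - t / 2)); [apply Hf|].
  auto_derive; [exact I|field].
Qed.

Lemma dH t : is_derive H t (H1 t).
Proof.
  unfold H, H1. apply (isd_ext _ _ (G1 t + 2 * (-1/2 * G1 (PI - t / 2)))); [field|].
  apply isd_plus; [apply dG|]. apply (is_derive_scal (fun t => G (PI - t / 2)) t 2).
  apply (dcomp G G1); apply dG.
Qed.
Lemma dH1 t : is_derive H1 t (H2 t).
Proof.
  unfold H1, H2. apply (isd_ext _ _ (G2 t - (-1/2 * G2 (PI - t / 2)))); [field|].
  apply isd_minus; [apply dG1|]. apply (dcomp G1 G2); apply dG1.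
Qed.
Lemma dH2 t : is_derive H2 t (- c * sin t * K c t + c / 4 * sin (PI - t / 2) * K c (PI - t / 2)).
Proof.
  unfold H2. apply (isd_ext _ _ (- c * sin t * K c t + (-1/2 * (- c * sin (PI - t / 2) * K c (PI - t / 2))) / 2)); [field|].
  apply isd_plus; [apply dG2|].
  apply (isd_ext _ _ (/2 * (-1 / 2 * (- c * sin (PI - t / 2) * K c (PI - t / 2))))); [field|].
  apply (isd_fext (fun t => / 2 * G2 (PI - t / 2))); [intros; field|].
  apply (is_derive_scal (fun t => G2 (PI - t / 2)) t (/2)).
  apply (dcomp G2 (fun z => - c * sin z * K c z)); apply dG2.
Qed.

Lemma G2_cont : continuity G2.
Proof. intros x. exact (contpt_of_derive _ _ _ (dG2 x)). Qed.
Lemma H2_cont : continuity H2.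
Proof. intros x. exact (contpt_of_derive _ _ _ (dH2 x)). Qed.

Lemma G2_dec x y : 0 <= x -> x <= y -> y <= PI -> G2 y <= G2 x.
Proof. intros. unfold G2. pose proof (K_dec c x y hc); lra. Qed.

Lemma H2_dec x y : 0 <= x -> x <= y -> y <= a -> H2 y <= H2 x.
Proof.
  intros Q1 Q2 Q3. apply (deriv_nonpos H2 (fun t => - c * sin t * K c t + c / 4 * sin (PI - t / 2) * K c (PI - t / 2)) x y Q2); [intros; apply dH2|].
  intros z Hz. apply H2dec_aux; [exact hc|]. unfold a in *; lra.
Qed.

Lemma mu_ge : (1 - Cst) / 2 <= mu.
Proof.
  unfold mu. pose proof (Phi_PI_ge c). pose proof PIpos.
  apply (Rmult_le_reg_r (2 * PI)); [lra|].
  field_simplify; [|lra]. nra.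
Qed.

Lemma H2_neg t : a <= t <= PI -> H2 t <= 0.
Proof.
  intros Ht. pose proof PIpos. pose proof mu_ge.
  unfold H2, G2.
  assert (Q1 : K c t <= K c a) by (apply K_dec; unfold a in *; lra).
  assert (Q3 : K c (PI - t / 2) <= K c (PI / 2)) by (apply K_dec; unfold a in *; lra).
  assert (Q4 : K c (PI / 2) = 1) by (unfold K; rewrite cos_PI2, Rmult_0_r, exp_0; reflexivity).
  assert (Q5 : K c a = exp (- c / 2)).
  { unfold K, a. rewrite cos_2PI3. f_equal. field. }
  lra.
Qed.

Lemma H1_a : H1 a = 0.
Proof. unfold H1. replace (PI - a / 2) with a by (unfold a; field). rg. Qed.

Lemma H_a : H a = 3 * G a.
Proof. unfold H. replace (PI - a / 2) with a by (unfold a; field). rg. Qed.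

Lemma H_0a : H 0 <= H a.
Proof.
  rewrite H_a. unfold H, G. replace (PI - 0 / 2) with PI by field.
  rewrite Psi0. unfold mu, a in *. pose proof PIpos.
  assert (E : PI / 3 * (1 - Cst) * Phi c PI = (1 - Cst) * Phi c PI / (2 * PI) * (2 * PI * PI / 3)) by (field; lra).
  rewrite E in hKL. 
  assert (E2 : 0 - (Phi c (2 * PI / 3) * 0 + (1 - Cst) * Phi c PI / (2 * PI) * (0 - 2 * PI / 3) ^ 2) +
    2 * (Psi c PI - (Phi c (2 * PI / 3) * PI + (1 - Cst) * Phi c PI / (2 * PI) * (PI - 2 * PI / 3) ^ 2)) -
    3 * (Psi c (2 * PI / 3) - (Phi c (2 * PI / 3) * (2 * PI / 3) + (1 - Cst) * Phi c PI / (2 * PI) * (2 * PI / 3 - 2 * PI / 3) ^ 2))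
    = 2 * Psi c PI - 3 * Psi c (2 * PI / 3) - (1 - Cst) * Phi c PI / (2 * PI) * (2 * PI * PI / 3)) by (field; lra).
  lra.
Qed.

Lemma H_le t : 0 <= t <= PI -> H t <= H a.
Proof.
  intros Ht. pose proof PIpos.
  destruct (Rle_dec t a) as [T|T].
  - apply (H_le_left H H1 H2 a dH dH1 H2_cont); auto.
    + unfold a; lra.
    + exact H2_dec.
    + exact H_0a.
    + exact H1_a.
    + lra.
  - apply (H_le_far H H1 H2 a PI dH dH1 H1_a); [|lra].
    intros z Hz. apply H2_neg; lra.
Qed.

Lemma sum_sorted t1 t2 t3 : 0 <= t1 -> t1 <= t2 -> t2 <= t3 -> t3 <= PI ->
  t1 + t2 + t3 = 2 * PI -> G t1 + G t2 + G t3 <= 3 * G a.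
Proof.
  intros. destruct (reduce G G1 G2 dG dG1 G2_cont G2_dec t1 t2 t3) as [t [Ht E]]; auto.
  rewrite <- H_a. pose proof (H_le t Ht). unfold H in *. lra.
Qed.

Lemma sum_all t1 t2 t3 : 0 <= t1 -> 0 <= t2 -> 0 <= t3 -> t1 <= PI -> t2 <= PI -> t3 <= PI ->
  t1 + t2 + t3 = 2 * PI -> G t1 + G t2 + G t3 <= 3 * G a.
Proof.
  intros.
  destruct (Rle_dec t1 t2); destruct (Rle_dec t2 t3); destruct (Rle_dec t1 t3).
  - apply sum_sorted; lra.
  - apply sum_sorted; lra.
  - pose proof (sum_sorted t1 t3 t2); lra.
  - pose proof (sum_sorted t3 t1 t2); lra.
  - pose proof (sum_sorted t2 t1 t3); lra.
  - pose proof (sum_sorted t2 t3 t1); lra.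
  - pose proof (sum_sorted t2 t1 t3); lra.
  - pose proof (sum_sorted t3 t2 t1); lra.
Qed.

Lemma main_ineq t1 t2 t3 : 0 <= t1 -> 0 <= t2 -> 0 <= t3 -> t1 <= PI -> t2 <= PI -> t3 <= PI ->
  t1 + t2 + t3 = 2 * PI ->
  - 3 * F c (2 * PI / 3) + (F c t1 + F c t2 + F c t3)
  <= - Cst * ((t1 / (2 * PI) - 1/3) ^ 2 + (t2 / (2 * PI) - 1/3) ^ 2 + (t3 / (2 * PI) - 1/3) ^ 2).
Proof.
  intros. pose proof (sum_all t1 t2 t3 H0 H3 H4 H5 H6 H7 H8) as S.
  unfold G, a in S. pose proof PIpos. pose proof (Phi_PI_ge c).
  rewrite !F_eq. unfold mu in S.
  set (P := Phi c PI) in *.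
  assert (E : t3 = 2 * PI - t1 - t2) by lra. subst t3.
  set (q := Psi c t1 + Psi c t2 + Psi c (2 * PI - t1 - t2) - 3 * Psi c (2 * PI / 3)).
  assert (Sq : q <= (1 - Cst) * P / (2 * PI) * ((t1 - 2*PI/3)^2 + (t2 - 2*PI/3)^2 + (2*PI - t1 - t2 - 2*PI/3)^2)).
  { unfold q. lra. }
  assert (E2 : - 3 * (Psi c (2 * PI / 3) / (2 * PI * P) - (2 * PI / 3 / (2 * PI)) ^ 2) +
    (Psi c t1 / (2 * PI * P) - (t1 / (2 * PI)) ^ 2 + (Psi c t2 / (2 * PI * P) - (t2 / (2 * PI)) ^ 2) +
     (Psi c (2 * PI - t1 - t2) / (2 * PI * P) - ((2 * PI - t1 - t2) / (2 * PI)) ^ 2))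
    = q / (2 * PI * P) - ((t1 / (2 * PI) - 1/3) ^ 2 + (t2 / (2 * PI) - 1/3) ^ 2 + ((2 * PI - t1 - t2) / (2 * PI) - 1/3) ^ 2)).
  { unfold q. field. lra. }
  rewrite E2.
  assert (E3 : (1 - Cst) * P / (2 * PI) * ((t1 - 2*PI/3)^2 + (t2 - 2*PI/3)^2 + (2*PI - t1 - t2 - 2*PI/3)^2) / (2 * PI * P)
     = (1 - Cst) * ((t1 / (2 * PI) - 1/3) ^ 2 + (t2 / (2 * PI) - 1/3) ^ 2 + ((2 * PI - t1 - t2) / (2 * PI) - 1/3) ^ 2)).
  { field. lra. }
  assert (q / (2 * PI * P) <= (1 - Cst) * P / (2 * PI) * ((t1 - 2*PI/3)^2 + (t2 - 2*PI/3)^2 + (2*PI - t1 - t2 - 2*PI/3)^2) / (2 * PI * P)).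
  { unfold Rdiv at 1 3. apply Rmult_le_compat_r; [|exact Sq].
    apply Rlt_le, Rinv_0_lt_compat. nra. }
  lra.
Qed.
End Main.

Lemma rpow_bounds : 4.325 <= Rpower 3 (4/3) <= 5.
Proof.
  set (x := Rpower 3 (4/3)).
  assert (xp : 0 < x) by (unfold x, Rpower; apply exp_pos).
  assert (E : x ^ 3 = 81).
  { rewrite <- Rpower_pow by exact xp. unfold x. rewrite Rpower_mult.
    replace (4 / 3 * INR 3) with (INR 4) by (simpl; field).
    rewrite Rpower_pow by lra. simpl; field. }
  simpl in E. split.
  - destruct (Rle_dec 4.325 x) as [h|h]; [exact h|]. exfalso.
    assert (x * x <= 4.325 * 4.325) by nra.
    assert (x * (x * x) <= 4.325 * (4.325 * 4.325)) by nra. nra.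
  - destruct (Rle_dec x 5) as [h|h]; [exact h|]. exfalso.
    assert (5 * 5 <= x * x) by nra.
    assert (5 * (5 * 5) <= x * (x * x)) by nra. nra.
Qed.

Theorem lemma3p3 (c t1 t2 t3 : R) :
  0 < c ->
  0 <= t1 -> 0 <= t2 -> 0 <= t3 ->
  t1 + t2 + t3 = 2 * PI ->
  t1 <= PI -> t2 <= PI -> t3 <= PI ->
  - 3 * F c (2 * PI / 3) + (F c t1 + F c t2 + F c t3)
  <= 0.158 * (-1 + (1 - Rpower 3 (4/3) / 5) * exp (- c * PI / 2)
                + Rpower 3 (4/3) / 5 * exp (- c * PI / 6))
     * ((t1 / (2 * PI) - 1/3) ^ 2 + (t2 / (2 * PI) - 1/3) ^ 2
        + (t3 / (2 * PI) - 1/3) ^ 2).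
Proof.
  intros hc h1 h2 h3 hs u1 u2 u3.
  pose proof rpow_bounds as Hx. pose proof PI_b as HPI.
  set (k := Rpower 3 (4/3) / 5) in *.
  assert (Hk : 0.865 <= k <= 1) by (unfold k; lra).
  set (e1 := exp (- c * PI / 2)). set (e2 := exp (- c * PI / 6)).
  assert (E1 : 1 + (- c * PI / 2) <= e1) by apply exp_ineq1_le.
  assert (E2 : 1 + (- c * PI / 6) <= e2) by apply exp_ineq1_le.
  assert (P1 : 0 < e1) by apply exp_pos. assert (P2 : 0 < e2) by apply exp_pos.
  set (Cst := - (0.158 * (-1 + (1 - k) * e1 + k * e2))).
  assert (Cle : Cst <= 0.158).
  { unfold Cst. assert (0 <= (1 - k) * e1) by nra. assert (0 <= k * e2) by nra. lra. }
  assert (Cgam : Cst <= gam * c).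
  { unfold Cst, gam.
    assert ((1 - k) * (1 - c * PI / 2) <= (1 - k) * e1) by nra.
    assert (k * (1 - c * PI / 6) <= k * e2) by nra.
    assert (0 < c * PI) by nra.
    assert (c * PI * (1/2 - k / 3) <= c * PI * (1/2 - 0.865 / 3)) by nra.
    assert (c * PI * (1/2 - 0.865 / 3) <= c * 3.1416 * (1/2 - 0.865 / 3)) by nra.
    lra. }
  assert (HphiP := Phi_PI_ge c).
  assert (hKL : 2 * Psi c PI - 3 * Psi c (2 * PI / 3) <= PI / 3 * (1 - Cst) * Phi c PI).
  { destruct (Rle_dec c (3/2)) as [C1|C1].
    - assert (K1 := KL c (lam1 c) (zL c) (dzL c) (zR c) (dzR c) (zL_deriv c) (zR_deriv c)
        (fun u hu => reg1_L c u (conj hc C1) hu) (fun u hu => reg1_R c u (conj hc C1) hu)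
        (zL_0 c) (zL_zR_a c hc) (zR_PI c hc)).
      unfold lam1 in K1.
      assert (PI / 3 * (1 - gam * c) * Phi c PI <= PI / 3 * (1 - Cst) * Phi c PI).
      { apply Rmult_le_compat_r; [lra|]. apply Rmult_le_compat_l; lra. }
      lra.
    - assert (C2 : 3/2 <= c) by lra.
      assert (K1 := KL c (842/1000 * PI / 3) z2 dz2 z2 dz2 z2_deriv z2_deriv
        (fun u hu => reg2_L c u C2 hu) (fun u hu => reg2_R c u C2 hu)
        z2_0 (Rle_refl _) z2_PI).
      assert (842/1000 * PI / 3 * Phi c PI <= PI / 3 * (1 - Cst) * Phi c PI).
      { apply Rmult_le_compat_r; [lra|]. nra. }
      lra. }
  assert (hexp : exp (- c / 2) + 1 / 2 <= 3 / 2 * (1 - Cst)).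
  { assert (Q := exp_ineq1_le (c / 2)).
    assert (Q2 : exp (- c / 2) * exp (c / 2) = 1).
    { rewrite <- exp_plus. replace (- c / 2 + c / 2) with 0 by field. apply exp_0. }
    assert (Q3 : 0 < exp (- c / 2)) by apply exp_pos.
    assert (Q4 : exp (- c / 2) * (1 + c / 2) <= 1) by nra.
    destruct (Rle_dec c (3/2)) as [C1|C1].
    - unfold gam in Cgam.
      assert (Q5 : 1 <= (1 + c / 2) * (1 - 3 / 2 * (1051 / 10000) * c)) by nra.
      assert (exp (- c / 2) <= 1 - 3 / 2 * (1051 / 10000) * c).
      { apply (Rmult_le_reg_r (1 + c / 2)); [lra|]. nra. }
      lra.
    - assert (exp (- c / 2) * (1 + 3/4) <= 1) by nra. lra. }
  assert (M := main_ineq c Cst hc Cle hKL hexp t1 t2 t3 h1 h2 h3 u1 u2 u3 hs).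
  unfold Cst in M. lra.
Qed.
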